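(* Let $n\ge 1$ be an integer and let $U_{6n}=\langle a,b : a^{2n}=b^3=1,\ a^{-1}ba=b^{-1}\rangle$ (a group of order $6n$). Let $\Gamma_{U_{6n}}$ be its non-commuting graph. Then the spectrum of the distance matrix $D(\Gamma_{U_{6n}})$ (eigenvalues counted with multiplicity, multiplicities being added if two of the listed values coincide) consists of: (a) $-2$ with multiplicity $5n-4$; (b) $n-2$ with multiplicity $2$; (c) $(4n-2)+n\sqrt{6}$ and $(4n-2)-n\sqrt{6}$, each with multiplicity $1$.
   Context: For a finite non-abelian group $G$ with centre $Z(G)$, the non-commuting graph $\Gamma_G$ is the simple undirected graph with vertex set $G\setminus Z(G)$, in which two distinct vertices $u,v$ are adjacent if and only if $uv\ne vu$. For a connected graph $H$, $d_{uv}$ denotes the length of a shortest path between vertices $u$ and $v$, and the distance matrix $D(H)$ is the matrix whose $(u,v)$-entry is $d_{uv}$. *)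

(* Defs.v *)
From HB Require Import structures.
From mathcomp Require Import all_boot all_order all_algebra all_fingroup all_solvable all_field.
Set Implicit Arguments. Unset Strict Implicit. Unset Printing Implicit Defensive.
Import GRing.Theory Num.Theory.

Local Open Scope group_scope.

Definition ncg_vertices (gT : finGroupType) (G : {group gT}) : {set gT} :=
  G :\: 'Z(G).

(* Adjacency in the non-commuting graph: u v distinct vertices with uv <> vu
   (uv <> vu already forces u <> v). *)
Definition ncg_adj (gT : finGroupType) (G : {group gT}) (u v : gT) : bool :=
  [&& u \in ncg_vertices G, v \in ncg_vertices G & u * v != v * u].

Fixpoint ncg_ball (gT : finGroupType) (G : {group gT}) (u : gT) (k : nat)
  : {set gT} :=
  match k with
  | 0 => [set u]
  | k'.+1 => ncg_ball G u k' :|: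
             [set y | [exists x in ncg_ball G u k', ncg_adj G x y]]
  end.

(* Graph distance d_{uv}: the least k such that v is within k steps of u.
   (Any shortest path has length < #|gT|; for an unreachable v this yields
   #|gT|, a convention irrelevant for connected graphs.) *)
Definition ncg_dist (gT : finGroupType) (G : {group gT}) (u v : gT) : nat :=
  find (fun k => v \in ncg_ball G u k) (iota 0 #|gT|).

Definition ncg_dist_mx (gT : finGroupType) (G : {group gT})
  : 'M[algC]_(#|ncg_vertices G|) :=
  (\matrix_(i, j) (ncg_dist G (enum_val i) (enum_val j))%:R)%R.

(* Main.v *)
Require Import Defs.
From HB Require Import structures.
From mathcomp Require Import all_boot all_order all_algebra all_fingroup all_solvable all_field.
From mathcomp Require Import ring zify.
Import GRing.Theory Num.Theory.
Local Open Scope ring_scope.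

Lemma sylvester_det (R : comNzRingType) m k (U : 'M[R]_(m, k)) (V : 'M[R]_(k, m)) (t : R) :
  t ^+ k * \det (t%:M - U *m V) = t ^+ m * \det (t%:M - V *m U).
Proof.
pose M := block_mx (t%:M : 'M_m) U V (1%:M : 'M_k).
have h1 : M = block_mx 1%:M U 0 1%:M *m block_mx (t%:M - U *m V) 0 V 1%:M.
  rewrite mulmx_block ?mul1mx ?mulmx1 ?mul0mx ?addr0 ?add0r.
  by rewrite subrK.
have h2 : block_mx 1%:M 0 (- V) t%:M *m M = block_mx t%:M U 0 (t%:M - V *m U).
  rewrite mulmx_block ?mul1mx ?mulmx1 ?mul0mx ?addr0 ?add0r mul_mx_scalar mul_scalar_mx.
  by rewrite scalerN addNr mulNmx addrC.
have := congr1 determinant h2.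
rewrite det_mulmx det_lblock det_ublock h1 det_mulmx det_ublock det_lblock.
by rewrite !det1 !mul1r !mulr1 !det_scalar.
Qed.

Lemma det4spec (R : comNzRingType) (t N : R) (A : 'M[R]_4) :
  (forall i j : 'I_4, A i j = if i == j :> nat then t - 2 * (if j == 0 :> nat then N + N else N)
                                 else - (if j == 0 :> nat then N + N else N)) ->
  \det A = (t - N) ^+ 2 * (t ^+ 2 - 8 * N * t + 10 * N ^+ 2).
Proof.
move=> AF.
rewrite (expand_det_row _ 0) !big_ord_recl big_ord0 /cofactor.
rewrite !(expand_det_row _ 0) !big_ord_recl !big_ord0 /cofactor.
rewrite !(expand_det_row _ 0) !big_ord_recl !big_ord0 /cofactor.
rewrite !det_mx11 !mxE !AF /=.
cbv [bump leq addn addn_rec subn subn_rec Nat.add Nat.sub]. simpl.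
ring.
Qed.


Lemma sum_delta (R : nzRingType) (I : finType) (x : I) (F : I -> R) :
  \sum_q ((x == q)%:R * F q) = F x.
Proof.
rewrite (bigD1 x) //= eqxx mul1r big1 ?addr0 // => q /negPf.
by rewrite eq_sym => ->; rewrite mul0r.

Qed.

Lemma charpoly_parts m n (p : 'I_m -> 'I_4) (D : 'M[algC]_m) :
  (forall i j, D i j = if i == j then 0 else if p i == p j then 2 else 1) ->
  (4 <= m)%N ->
  (forall q : 'I_4, #|[set i | p i == q]| = if q == 0 :> nat then (n + n)%N else n) ->
  char_poly D = ('X + 2%:P) ^+ (m - 4) *
     ((('X + 2%:P) - (n%:R)%:P) ^+ 2 * (('X + 2%:P) ^+ 2 - 8 * (n%:R)%:P * ('X + 2%:P)
          + 10 * (n%:R)%:P ^+ 2)).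
Proof.
move=> DE m4 hs.
set t : {poly algC} := 'X + 2%:P.
pose U : 'M[{poly algC}]_(m, 4) := \matrix_(i, q) (p i == q)%:R.
pose V : 'M[{poly algC}]_(4, m) := \matrix_(q, j) ((p j == q)%:R + 1).
have hUV : char_poly_mx D = t%:M - U *m V.
  apply/matrixP => i j; rewrite !mxE.
  under eq_bigr => q _ do rewrite !mxE.
  rewrite sum_delta DE /t.
  case: (i =P j) => [->|ij]; first by rewrite eqxx /= mulr1n rmorph0 subr0; ring.
  rewrite !mulr0n; case: (p i =P p j) => [->|pij]; rewrite ?eqxx /=.
    by rewrite rmorph_nat; ring.
  have -> : (p j == p i) = false by apply/eqP => h; apply: pij.
  by rewrite /= rmorph1; ring.
have sumq q : \sum_j ((p j == q)%:R : {poly algC}) = (#|[set i | p i == q]|)%:R.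
  rewrite -sumr_const [RHS]big_mkcond /=; apply: eq_bigr => j _; rewrite inE.
  by case: (p j == q).
have hVU : forall r q, (V *m U) r q = ((r == q)%:R + 1) * (#|[set i | p i == q]|)%:R.
  move=> r q; rewrite !mxE -sumq mulr_sumr; apply: eq_bigr => j _; rewrite !mxE.
  have [->|pq] := eqVneq (p j) q; last by rewrite /= !mulr0n !mulr0.
  by rewrite /= mulr1n !mulr1 eq_sym.
have tn0 : t ^+ 4 != 0 by rewrite expf_neq0 // monic_neq0 // monicXaddC.
apply: (mulfI tn0).
rewrite /char_poly hUV sylvester_det.
rewrite -{1}(subnK m4) exprD -mulrA mulrCA; congr (_ * _).
rewrite (@det4spec _ t (n%:R)%:P) // => i j.
have -> : V *m U = \matrix_(r, q) (((r == q)%:R + 1) * (#|[set i | p i == q]|)%:R).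
  by apply/matrixP => r q; rewrite hVU mxE.
rewrite !mxE hs !rmorph_nat.
have -> : (i == j :> nat) = (i == j) by [].
case: (i == j); case: (j == 0 :> nat); rewrite /= ?natrD ?mulr1n ?mulr0n.
all: ring.
Qed.



Lemma dist_parts (gT : finGroupType) (G : {group gT}) (part : gT -> 'I_4) :
  (forall u v, u \in ncg_vertices G -> v \in ncg_vertices G ->
     (u * v != v * u)%g = (part u != part v)) ->
  (forall u, u \in ncg_vertices G -> exists2 w, w \in ncg_vertices G & part w != part u) ->
  (3 <= #|gT|)%N ->
  forall u v, u \in ncg_vertices G -> v \in ncg_vertices G ->
  ncg_dist G u v = if u == v then 0%N else if part u == part v then 2%N else 1%N.
Proof.
move=> hadj hw hN u v uV vV.
have adjE : forall x y, x \in ncg_vertices G -> y \in ncg_vertices G ->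
    ncg_adj G x y = (part x != part y).
  by move=> x y xV yV; rewrite /ncg_adj xV yV hadj.
have b0 : forall y, (y \in ncg_ball G u 0) = (y == u) by move=> y; rewrite /= inE.
have b1 : forall y, (y \in ncg_ball G u 1) = (y == u) || ncg_adj G u y.
  move=> y; rewrite /= !inE; congr (_ || _); apply/existsP/idP => [[x]|h].
    by rewrite inE => /andP[/eqP -> ].
  by exists u; rewrite inE eqxx.
rewrite /ncg_dist.
case: #|gT| hN => [|[|[|N']]] // _.
rewrite /=.
have [<-|uv] := eqVneq v u; first by rewrite ?eqxx set11.
rewrite ?(eq_sym u v) ?uv.
have -> : (v \in [set u]) = false by rewrite inE (negPf uv).
have := b1 v; rewrite /= => ->; rewrite (negPf uv) /= adjE //.
case: (part u =P part v) => [puv|puv] /=; last by [].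
suff -> : (v \in ncg_ball G u 2) = true by [].

  rewrite /= inE; apply/orP; right; rewrite inE; apply/existsP.
  have [w wV pw] := hw u uV.
  exists w; rewrite b1 adjE // (eq_sym (part u)) pw orbT /= adjE // -puv; exact: pw.

Qed.


Lemma conj_pow (gT : finGroupType) (a b : gT) :
  (b ^+ 3 = 1)%g -> (a^-1 * b * a = b^-1)%g ->
  forall j k, (b ^+ j * a ^+ k = a ^+ k * b ^+ (j * 2 ^ k))%g.
Proof.
move=> hb hab.
have binv : (b^-1 = b ^+ 2)%g.
  by rewrite -[RHS](mulKg b) -expgS hb mulg1.
have bc : (b ^ a = b ^+ 2)%g by rewrite conjgE mulgA hab.
have bk : forall k, (b ^ (a ^+ k) = b ^+ (2 ^ k))%g.
  elim=> [|k IH]; first by rewrite expg0 conjg1 expn0 expg1.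
  by rewrite expgSr conjgM IH conjXg bc -expgM expnS.
move=> j k; rewrite conjgC conjXg bk -expgM mulnC.
done.
Qed.


Definition ecode (k : nat) : nat := if odd k then 2 else 1.
Definition pcode (i j : nat) : nat := if odd i then j.+1 else 0.

Lemma exp2_mod3 k : (2 ^ k %% 3 = ecode k)%N.
Proof.
rewrite /ecode; elim: k => // k IH.
by rewrite expnS -modnMm IH /=; case: (odd k).
Qed.

Lemma adj_code i j k l : (j < 3)%N -> (l < 3)%N -> (odd i || (j != 0%N)) -> (odd k || (l != 0%N)) ->
  (((j * ecode k + l) %% 3) == ((l * ecode i + j) %% 3))%N = (pcode i j == pcode k l).
Proof.
rewrite /ecode /pcode; case: (odd i); case: (odd k);
 case: j => [|[|[|j]]] //; case: l => [|[|[|l]]] //.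
Qed.

Lemma pcode_lt i j : (j < 3)%N -> (pcode i j < 4)%N.
Proof. by rewrite /pcode; case: (odd i). Qed.

Lemma inord_eq4 x y : (x < 4)%N -> (y < 4)%N -> (inord x == inord y :> 'I_4) = (x == y).
Proof. by move=> hx hy; rewrite -val_eqE /= !inordK. Qed.

Lemma inord_eqq x (q : 'I_4) : (x < 4)%N -> (inord x == q) = (x == q :> nat).
Proof. by move=> hx; rewrite -val_eqE /= inordK. Qed.

Lemma sum_odd n x y : (\sum_(i < 2 * n) (if odd i then x else y) = n * x + n * y)%N.
Proof.
elim: n => [|n IH]; first by rewrite big_ord0.
rewrite (_ : (2 * n.+1 = (2 * n).+2)%N); last by lia.
rewrite !big_ord_recr /= IH oddM /= !mulSn; lia.
Qed.

Lemma card_parts (I : finType) (p : I -> 'I_4) :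
  #|I| = (\sum_(q < 4) #|[set i | p i == q]|)%N.
Proof.
rewrite -sum1_card (partition_big p xpredT) //=; apply: eq_bigr => q _.
by rewrite -sum1_card; apply: eq_bigl => i; rewrite inE.
Qed.

Lemma card_pairs n (f : nat -> nat -> bool) :
  #|[set ij : 'I_n * 'I_3 | f ij.1 ij.2]| = (\sum_(i < n) (f i 0 + f i 1 + f i 2))%N.
Proof.
rewrite -sum1_card big_mkcond /=.
transitivity (\sum_(ij : 'I_n * 'I_3) (f ij.1 ij.2 : nat))%N.
  by apply: eq_bigr => ij _; rewrite inE; case: (f _ _).
rewrite -(pair_big xpredT xpredT (fun (i : 'I_n) (j : 'I_3) => (f i j : nat))) /=.
by apply: eq_bigr => i _; rewrite !big_ord_recl big_ord0 /= addn0 addnA.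
Qed.

Theorem theorem5p1 (gT : finGroupType) (G : {group gT}) (a b : gT) (n : nat) :
  (1 <= n)%N ->
  G :=: <<[set a; b]>>%g ->
  (a ^+ (2 * n) = 1)%g ->
  (b ^+ 3 = 1)%g ->
  (a^-1 * b * a = b^-1)%g ->
  #|G| = (6 * n)%N ->
  char_poly (ncg_dist_mx G) =
    ('X + 2%:P) ^+ (5 * n - 4) * ('X - (n%:R - 2 : algC)%:P) ^+ 2
    * ('X - ((4 * n)%:R - 2 + n%:R * sqrtC 6 : algC)%:P)
    * ('X - ((4 * n)%:R - 2 - n%:R * sqrtC 6 : algC)%:P).
Proof.
move=> hn hG ha hb hab hcard.
have n2 : (0 < 2 * n)%N by rewrite muln_gt0 hn.
pose phi (ij : 'I_(2 * n) * 'I_3) := (a ^+ ij.1 * b ^+ ij.2)%g.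
pose mk (x y : nat) : 'I_(2 * n) * 'I_3 := (Ordinal (ltn_pmod x n2), Ordinal (ltn_pmod y (isT : 0 < 3)%N)).
have phimk x y : phi (mk x y) = (a ^+ x * b ^+ y)%g by rewrite /phi /= !expg_mod.
have mulE i j k l : ((a ^+ i * b ^+ j) * (a ^+ k * b ^+ l) = a ^+ (i + k) * b ^+ (j * 2 ^ k + l))%g.
  by rewrite mulgA -(mulgA _ _ (a ^+ k)%g) (conj_pow _ _ _ hb hab j k) mulgA -expgD -mulgA -expgD.
have aG : a \in G by rewrite hG mem_gen // !inE eqxx.
have bG : b \in G by rewrite hG mem_gen // !inE eqxx orbT.
have phiG ij : phi ij \in G by rewrite groupM ?groupX.
pose S := [set phi ij | ij in setT].
have GS : G \subset S.
  have gS : group_set S.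
    apply/group_setP; split.
      by apply/imsetP; exists (mk 0 0) => //; rewrite phimk !expg0 mulg1.
    move=> _ _ /imsetP[[i j] _ ->] /imsetP[[k l] _ ->].
    by apply/imsetP; exists (mk (i + k)%N (j * 2 ^ k + l)%N) => //; rewrite phimk /phi /= mulE.
  rewrite hG (gen_subG _ (Group gS)) subUset !sub1set; apply/andP; split.
    by apply/imsetP; exists (mk 1 0) => //; rewrite phimk expg1 expg0 mulg1.
  by apply/imsetP; exists (mk 0 1) => //; rewrite phimk expg1 expg0 mul1g.
have phi_inj : injective phi.
  have : #|S| == #|[set: 'I_(2 * n) * 'I_3]|.
    rewrite eqn_leq leq_imset_card /= cardsT card_prod !card_ord.
    have -> : (2 * n * 3 = #|G|)%N by rewrite hcard; lia.
    exact: subset_leq_card.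
  by move/imset_injP => inj x y; apply: inj; rewrite inE.
have Gphi x : x \in G -> exists ij, x = phi ij.
  by move=> /(subsetP GS) /imsetP[ij _ ->]; exists ij.
have bmod x y : (b ^+ x = b ^+ y)%g -> (x %% 3 = y %% 3)%N.
  move=> h; have := phi_inj (mk 0 x) (mk 0 y); rewrite !phimk !expg0 !mul1g.
  by move=> /(_ h) /(congr1 (fun p => val p.2)).
have emod j k l : ((j * 2 ^ k + l) %% 3 = (j * ecode k + l) %% 3)%N.
  by rewrite -modnDml -modnMmr exp2_mod3 modnDml.
have commE i j k l : ((a ^+ i * b ^+ j) * (a ^+ k * b ^+ l) == (a ^+ k * b ^+ l) * (a ^+ i * b ^+ j))%g
    = ((j * ecode k + l) %% 3 == (l * ecode i + j) %% 3)%N.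
  rewrite !mulE (addnC k i) -!emod; apply/eqP/eqP => [/mulgI /bmod //|h].
  by rewrite -(expg_mod _ hb) h expg_mod.
have central ij : (phi ij \in ('Z(G))%g) = ~~ odd ij.1 && (ij.2 == 0 :> nat).
  case: ij => [i j] /=; rewrite /phi /=; apply/centerP/idP.
    case=> _ hc.
    have h1 := commE i j 1 0; rewrite expg1 expg0 mulg1 (hc a aG) eqxx in h1.
    have h2 := commE i j 0 1; rewrite expg0 expg1 mul1g (hc b bG) eqxx in h2.
    move: h1 h2; clear hc; rewrite /ecode /=; case: (odd i); case: j => [[|[|[|j]]] hj] //.
  move=> /andP[hi hj]; split; first by rewrite groupM ?groupX.
  move=> y /Gphi [[k l] ->]; rewrite /commute /phi /=; apply/eqP.
  by rewrite commE /ecode (negPf hi) (eqP hj) mul0n add0n muln1 addn0.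
have vert ij : (phi ij \in ncg_vertices G) = odd ij.1 || (ij.2 != 0 :> nat).
  by rewrite /ncg_vertices inE central phiG andbT negb_and negbK.
pose part (x : gT) : 'I_4 :=
  if [pick ij | phi ij == x] is Some ij then inord (pcode ij.1 ij.2) else 0.
have partE ij : part (phi ij) = inord (pcode ij.1 ij.2).
  rewrite /part; case: pickP => [ij' /eqP /phi_inj -> //|/(_ ij)].
  by rewrite eqxx.
have VG x : x \in ncg_vertices G -> x \in G by rewrite /ncg_vertices inE => /andP[].
have hadj u v : u \in ncg_vertices G -> v \in ncg_vertices G ->
     (u * v != v * u)%g = (part u != part v).
  move=> uV vV; have [[i j] eu] := Gphi u (VG u uV); have [[k l] ev] := Gphi v (VG v vV).
  move: uV vV; rewrite eu ev !vert !partE /= => uV vV.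
  rewrite inord_eq4 ?pcode_lt // /phi /= commE adj_code //.
have a1 : a = phi (mk 1 0) by rewrite phimk expg1 expg0 mulg1.
have b1 : b = phi (mk 0 1) by rewrite phimk expg1 expg0 mul1g.
have n1 : (1 %% (2 * n) = 1)%N by rewrite modn_small //; lia.
have aV : a \in ncg_vertices G by rewrite a1 vert /= n1.
have bV : b \in ncg_vertices G by rewrite b1 vert /= mod0n.
have pa : part a = inord 1 by rewrite a1 partE /= n1.
have pb : part b = inord 0 by rewrite b1 partE /= mod0n.
have hw u : u \in ncg_vertices G -> exists2 w, w \in ncg_vertices G & part w != part u.
  move=> uV; case: (part u =P inord 0) => [->|pu].
    by exists a => //; rewrite pa inord_eq4.
  by exists b => //; rewrite pb; apply/eqP => h; apply: pu.
have hN : (3 <= #|gT|)%N by apply: leq_trans _ (max_card G); rewrite hcard; lia.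
pose m := #|ncg_vertices G|.
pose p (i : 'I_m) := part (enum_val i).
have hD i j : ncg_dist_mx G i j = if i == j then 0 else if p i == p j then 2 else 1.
  rewrite /ncg_dist_mx mxE (@dist_parts _ _ part hadj hw hN) ?enum_valP // (inj_eq enum_val_inj).
  by case: (i == j); case: (p i == p j).
have hs1 q : #|[set i : 'I_m | p i == q]| = #|[set x in ncg_vertices G | part x == q]|.
  have -> : [set x in ncg_vertices G | part x == q] = enum_val @: [set i : 'I_m | p i == q].
    apply/setP => x; rewrite inE; apply/andP/imsetP => [[xV px]|[i]].
      exists (enum_rank_in xV x); first by rewrite inE /p enum_rankK_in.
      by rewrite enum_rankK_in.
    by rewrite inE => pi ->; rewrite enum_valP.
  by rewrite card_imset //; exact: enum_val_inj.
have hs2 q : #|[set x in ncg_vertices G | part x == q]| =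
    #|[set ij : 'I_(2 * n) * 'I_3 | (odd ij.1 || (ij.2 != 0 :> nat)) && (pcode ij.1 ij.2 == q)]|.
  have -> : [set x in ncg_vertices G | part x == q] =
      phi @: [set ij : 'I_(2 * n) * 'I_3 | (odd ij.1 || (ij.2 != 0 :> nat)) && (pcode ij.1 ij.2 == q)].
    apply/setP => x; rewrite inE; apply/andP/imsetP => [[xV px]|[ij]].
      have [ij ex] := Gphi x (VG x xV); exists ij => //.
      move: xV px; rewrite ex inE vert partE => -> /=.
      by rewrite inord_eqq ?pcode_lt.
    rewrite inE => /andP[h1 h2] ->; rewrite vert h1 partE (eqP h2) inord_val //.
  by rewrite card_imset.
have hs q : #|[set i : 'I_m | p i == q]| = (if q == 0 :> nat then n + n else n)%N.
  rewrite hs1 hs2 (card_pairs _ (fun i j => (odd i || (j != 0%N)) && (pcode i j == q))).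
  rewrite (eq_bigr (fun i : 'I_(2 * n) => if odd i then ((1 == q :> nat) + (2 == q :> nat) + (3 == q :> nat))%N
                     else ((0 == q :> nat) + (0 == q :> nat))%N)); last first.
    by move=> i _; rewrite /pcode; case: (odd i) => /=; lia.
  rewrite sum_odd; case: q => [[|[|[|[|q]]]] hq] //=; lia.
have hm : m = (5 * n)%N.
  rewrite -[m]card_ord (card_parts _ p) !big_ord_recl big_ord0 !hs /=; lia.
rewrite (@charpoly_parts m n p (ncg_dist_mx G) hD); last 2 first.
- by rewrite hm; lia.
- exact: hs.
rewrite hm -!mulrA; congr (_ * _).
have h2 (x y : algC) : ('X - (x + y)%:P) * ('X - (x - y)%:P) = ('X - x%:P) ^+ 2 - (y ^+ 2)%:P.
  by rewrite rmorphD rmorphB rmorphXn /=; ring.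
rewrite h2 exprMn sqrtCK.
rewrite !(rmorphB, rmorphD, rmorphM, rmorphXn, rmorph_nat) /=.
ring.
Qed.
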